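(* Let $V$, $P$, $v_h$ and $\hat v_h^N$ be as in the context. Then for every integer $N\ge0$, $$\|v_h'-(\hat v_h^N)'\|_{L^2(\mathbb{T})}=O(h^{\frac{N+1}{2}})\quad\text{as }h\to0.$$
   Context: $\mathbb{T}=\mathbb{R}/\mathbb{Z}\cong[-\tfrac12,\tfrac12)$. $V:\mathbb{T}\to\mathbb{R}$ is smooth, symmetric, with a unique non-degenerate minimum at $0$. $\overline H(P)$ is the effective Hamiltonian: the unique constant $c$ for which $\tfrac12(P+\phi')^2+V=c$ has a periodic viscosity solution; $P_{crit}=\inf\{P:\overline H(P)>\min\overline H\}$, and $P>P_{crit}$ is fixed, so that $\overline H(P)>\max V$. For $h>0$, $v_h$ is a periodic solution of $-\tfrac h2v_h''+\tfrac12(P+v_h')^2+V=\overline H_h(P)$, where $\overline H_h(P)$ is the unique constant for which such a periodic solution exists. Put $p^+(x)=\sqrt{2(\overline H(P)-V(x))}>0$ and $\sigma_0=c/p^+$ with $\int_{\mathbb{T}}\sigma_0=1$. Define $\overline H_0=\overline H(P)$, $v_0(x)=\int_{-1/2}^x p^+(s)ds-P(x+\tfrac12)$, and inductively for $j\ge1$: $\overline H_j=\int_{\mathbb{T}}\big[-\tfrac12 v_{j-1}''+\tfrac12\sum_{i=1}^{j-1}v_i'v_{j-i}'\big]\sigma_0\,dx$, and $v_j$ a smooth periodic solution (unique up to additive constant) of $-\tfrac12v_{j-1}''+p^+v_j'+\tfrac12\sum_{i=1}^{j-1}v_i'v_{j-i}'=\overline H_j$. Set $\hat v_h^N=\sum_{j=0}^N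 h^jv_j$. *)

(* Defs.v *)
From Stdlib Require Import Reals List.
From Coquelicot Require Import Coquelicot.
Open Scope R_scope.

(* Functions on T = R/Z are represented as 1-periodic functions on R;
   integrals over T are Riemann integrals over [-1/2, 1/2]. *)
Definition periodic1 (f : R -> R) : Prop := forall x, f (x + 1) = f x.

Definition smooth (f : R -> R) : Prop := forall (n : nat) (x : R), ex_derive_n f n x.

Definition C1 (f : R -> R) : Prop :=
  forall x, ex_derive f x /\ continuous (Derive f) x.

Definition Ham (V : R -> R) (P x p : R) : R := 1/2 * (P + p) ^ 2 + V x.

Definition visc_sub (V : R -> R) (P c : R) (phi : R -> R) : Prop :=
  forall (psi : R -> R) (x0 : R), C1 psi ->
    (exists d, 0 < d /\ forall y, Rabs (y - x0) < d ->
        phi y - psi y <= phi x0 - psi x0) ->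
    Ham V P x0 (Derive psi x0) <= c.

Definition visc_super (V : R -> R) (P c : R) (phi : R -> R) : Prop :=
  forall (psi : R -> R) (x0 : R), C1 psi ->
    (exists d, 0 < d /\ forall y, Rabs (y - x0) < d ->
        phi x0 - psi x0 <= phi y - psi y) ->
    c <= Ham V P x0 (Derive psi x0).

(* "The cell problem 1/2 (P + phi')^2 + V = c has a periodic viscosity solution",
   i.e. (by uniqueness of the constant) c = Hbar(P). *)
Definition cell_solvable (V : R -> R) (P c : R) : Prop :=
  exists phi : R -> R, periodic1 phi /\ (forall x, continuous phi x) /\
    visc_sub V P c phi /\ visc_super V P c phi.

(* P > P_crit = inf { Q >= 0 : Hbar(Q) > min Hbar }:
   some Q in [0, P) has Hbar(Q) > Hbar(R) for some R. *)
Definition above_Pcrit (V : R -> R) (P : R) : Prop :=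
  exists Q, 0 <= Q < P /\
    exists cQ R0 cR, cell_solvable V Q cQ /\ cell_solvable V R0 cR /\ cR < cQ.

Definition pplus (V : R -> R) (c x : R) : R := sqrt (2 * (c - V x)).

(* sigma_0 = kappa / p^+ normalized so that its integral over T is 1. *)
Definition sigma0 (V : R -> R) (c x : R) : R :=
  / RInt (fun s => / pplus V c s) (-1/2) (1/2) * / pplus V c x.

Definition v0 (V : R -> R) (P c x : R) : R :=
  RInt (pplus V c) (-1/2) x - P * (x + 1/2).

Definition conv_sum (v : nat -> R -> R) (j : nat) (x : R) : R :=
  fold_right Rplus 0
    (map (fun i => Derive (v i) x * Derive (v (j - i)%nat) x) (seq 1 (j - 1))).

Definition hatv (v : nat -> R -> R) (h : R) (N : nat) (x : R) : R :=
  sum_f_R0 (fun j => h ^ j * v j x) N.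

Definition L2T (f : R -> R) : R := sqrt (RInt (fun x => (f x) ^ 2) (-1/2) (1/2)).

(* Main.v *)
Require Import Defs.
From Stdlib Require Import Reals List Lra Lia ZArith.
From Coquelicot Require Import Coquelicot.
Open Scope R_scope.


Lemma cont_pt (f:R->R) x : continuous f x -> continuity_pt f x.
Proof. intros H; apply continuity_pt_filterlim; exact H. Qed.
Lemma pt_cont (f:R->R) x : continuity_pt f x -> continuous f x.
Proof. intros H; apply continuity_pt_filterlim; exact H. Qed.

Lemma per_nat f : periodic1 f -> forall n x, f (x + INR n) = f x.
Proof. intros Hf n; induction n; intro x. simpl; rewrite Rplus_0_r; auto.
 rewrite S_INR. replace (x + (INR n + 1)) with ((x + INR n) + 1) by ring. rewrite Hf; auto. Qed.

Lemma per_Z f : periodic1 f -> forall k x, f (x + IZR k) = f x.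
Proof. intros Hf k x. destruct (Z_le_gt_dec 0 k) as [Hk|Hk].
 - rewrite <- (Z2Nat.id k Hk), <- INR_IZR_INZ. apply per_nat; auto.
 - replace k with (- Z.of_nat (Z.to_nat (-k)))%Z by lia.
   rewrite opp_IZR, <- INR_IZR_INZ.
   rewrite <- (per_nat f Hf (Z.to_nat (-k)) (x + - INR (Z.to_nat (- k)))). f_equal; ring.
Qed.

Lemma per_reduce x : exists k, 0 <= x + IZR k <= 1.
Proof. exists (1 - up x)%Z. rewrite minus_IZR. destruct (archimed x). lra. Qed.

Lemma per_max f : periodic1 f -> (forall x, continuous f x) -> exists x0, forall y, f y <= f x0.
Proof. intros Hp Hc. destruct (continuity_ab_maj f 0 1) as [M [HM _]]. lra.
 intros; apply cont_pt; auto. exists M. intro y. destruct (per_reduce y) as [k Hk].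
 rewrite <- (per_Z f Hp k y). apply HM; auto. Qed.

Lemma per_min f : periodic1 f -> (forall x, continuous f x) -> exists x0, forall y, f x0 <= f y.
Proof. intros Hp Hc. destruct (continuity_ab_min f 0 1) as [M [HM _]]. lra.
 intros; apply cont_pt; auto. exists M. intro y. destruct (per_reduce y) as [k Hk].
 rewrite <- (per_Z f Hp k y). apply HM; auto. Qed.

Lemma per_bound f : periodic1 f -> (forall x, continuous f x) -> exists B, forall y, Rabs (f y) <= B.
Proof. intros Hp Hc. destruct (per_max (fun x => Rabs (f x))) as [x0 H].
 intro x; simpl; rewrite Hp; auto. intro x; apply continuous_Rabs_comp; auto.
 exists (Rabs (f x0)); auto. Qed.

Lemma deriv_zero_max f x0 : ex_derive f x0 -> (forall y, f y <= f x0) -> Derive f x0 = 0.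
Proof. intros Hd Hm.
  assert (H : derivable_pt_lim f x0 (Derive f x0)).
  { apply is_derive_Reals, Derive_correct, Hd. }
  pose proof (deriv_maximum f (x0-1) (x0+1) x0 (exist _ (Derive f x0) H)) as K.
  simpl in K. apply K; try lra. intros; auto. Qed.

Lemma deriv_zero_min f x0 : ex_derive f x0 -> (forall y, f x0 <= f y) -> Derive f x0 = 0.
Proof. intros Hd Hm.
  assert (H : derivable_pt_lim f x0 (Derive f x0)).
  { apply is_derive_Reals, Derive_correct, Hd. }
  pose proof (deriv_minimum f (x0-1) (x0+1) x0 (exist _ (Derive f x0) H)) as K.
  simpl in K. apply K; try lra. intros; auto. Qed.

Lemma exRI (f:R->R) : (forall x, continuous f x) -> forall a b, ex_RInt f a b.
Proof. intros Hc a b. apply (ex_RInt_continuous (V:=R_CompleteNormedModule)). intros; auto. Qed.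

Lemma is_derive_RInt0 (f : R -> R) a x : (forall y, continuous f y) -> is_derive (fun z => RInt f a z) x (f x).
Proof. intro Hc. apply (is_derive_RInt f (fun z => RInt f a z) a x).
 apply filter_forall. intro b. apply (RInt_correct (V:=R_CompleteNormedModule)), ex_RInt_continuous. intros; auto. auto. Qed.

Lemma deriv_const_eq G a b : (forall z, is_derive G z 0) -> G a = G b.
Proof. intro H. destruct (MVT_gen G a b (fun _ => 0)) as [c [_ Hc]].
 intros; auto. intros; apply cont_pt, (ex_derive_continuous (K:=R_AbsRing) (V:=R_NormedModule)). eexists; apply H.
 lra. Qed.

Lemma isd_minus (f g : R -> R) x df dg : is_derive f x df -> is_derive g x dg -> is_derive (fun z => f z - g z) x (df - dg).
Proof. intros; exact (is_derive_minus f g x df dg H H0). Qed.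
Lemma isd_plus (f g : R -> R) x df dg : is_derive f x df -> is_derive g x dg -> is_derive (fun z => f z + g z) x (df + dg).
Proof. intros; exact (is_derive_plus f g x df dg H H0). Qed.
Lemma isd_shift (f : R -> R) x df : is_derive f (x+1) df -> is_derive (fun z => f (z+1)) x df.
Proof. intro H. pose proof (is_derive_comp f (fun z => z + 1) x df 1 H) as K.
  replace df with (scal 1 df). apply K. 
  auto_derive; auto.
  unfold scal; simpl; unfold mult; simpl; ring. Qed.

Lemma per_int (f : R -> R) : periodic1 f -> (forall x, continuous f x) ->
  forall z, RInt f 0 (z+1) - RInt f 0 z = RInt f (-1/2) (1/2).
Proof. intros Hp Hc z.
 assert (E : forall a b, ex_RInt f a b) by (apply exRI; auto).
 transitivity (RInt f 0 (-1/2+1) - RInt f 0 (-1/2)).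
 - apply (deriv_const_eq (fun z => RInt f 0 (z+1) - RInt f 0 z)). intro y.
   assert (Hd : is_derive (fun z => RInt f 0 (z+1) - RInt f 0 z) y (f (y+1) - f y)).
   2:{ rewrite Hp, Rminus_diag in Hd. exact Hd. }
   apply isd_minus. apply (isd_shift (fun z => RInt f 0 z)).
   apply is_derive_RInt0; auto.
   apply is_derive_RInt0; auto.
 - replace (-1/2+1) with (1/2) by lra.
   rewrite <- (RInt_Chasles f (-1/2) 0 (1/2)); auto.
   rewrite <- (opp_RInt_swap f 0 (-1/2)); auto. unfold plus, opp; simpl. ring.
Qed.

Lemma c_plus (f g : R -> R) x : continuous f x -> continuous g x -> continuous (fun z => f z + g z) x.
Proof. intros; exact (continuous_plus (K:=R_AbsRing) (V:=R_NormedModule) f g x H H0). Qed.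
Lemma c_minus (f g : R -> R) x : continuous f x -> continuous g x -> continuous (fun z => f z - g z) x.
Proof. intros; exact (continuous_minus (K:=R_AbsRing) (V:=R_NormedModule) f g x H H0). Qed.
Lemma c_mult (f g : R -> R) x : continuous f x -> continuous g x -> continuous (fun z => f z * g z) x.
Proof. intros; exact (continuous_mult (K:=R_AbsRing) f g x H H0). Qed.
Lemma c_const (k x : R) : continuous (fun _ => k) x.
Proof. apply continuous_const. Qed.
Lemma c_id (x : R) : continuous (fun z => z) x.
Proof. apply continuous_id. Qed.

Lemma cont_eps f x : continuous f x -> forall e, 0 < e -> exists d, 0 < d /\ forall y, Rabs (y - x) < d -> Rabs (f y - f x) < e.
Proof. intros Hc e He.
 destruct (proj1 (continuity_pt_locally f x) (cont_pt f x Hc) (mkposreal e He)) as [d Hd].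
 exists d. split. apply cond_pos. intros y Hy. apply (Hd y). exact Hy. Qed.

Lemma smooth_cont V : smooth V -> forall x, continuous V x.
Proof. intros H x. apply (ex_derive_continuous (K:=R_AbsRing) (V:=R_NormedModule)). exact (H 1%nat x). Qed.

Lemma ex_der_cont (f : R -> R) (x : R) : ex_derive f x -> continuous f x.
Proof. intro H; apply (ex_derive_continuous (K:=R_AbsRing) (V:=R_NormedModule)); exact H. Qed.

Lemma testfun (f : R -> R) lam Pp : periodic1 f -> (forall x, continuous f x) ->
  lam * RInt f (-1/2) (1/2) = Pp ->
  Defs.C1 (fun z => lam * RInt f 0 z - Pp * z) /\
  (forall z, Derive (fun z => lam * RInt f 0 z - Pp * z) z = lam * f z - Pp) /\
  periodic1 (fun z => lam * RInt f 0 z - Pp * z).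
Proof.
 intros Hp Hc HI.
 assert (D : forall z, is_derive (fun z => lam * RInt f 0 z - Pp * z) z (lam * f z - Pp)).
 { intro z. apply isd_minus. apply is_derive_scal. apply is_derive_RInt0; auto.
   auto_derive; auto; ring. }
 assert (DD: forall z, Derive (fun z => lam * RInt f 0 z - Pp * z) z = lam * f z - Pp).
 { intro; apply is_derive_unique, D. }
 split; [|split].
 - intro x. split. eexists; apply D.
   apply (continuous_ext (fun z => lam * f z - Pp)). intro; rewrite DD; auto.
   apply c_minus. apply c_mult. apply c_const. auto. apply c_const.
 - exact DD.
 - intro z. pose proof (per_int f Hp Hc z). simpl.
   replace (RInt f 0 (z+1)) with (RInt f 0 z + RInt f (-1/2) (1/2)) by lra.
   rewrite Rmult_plus_distr_l, HI. ring.
Qed.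

Lemma claim1 V P' c' : (forall x, continuous V x) -> cell_solvable V P' c' -> forall xs, V xs <= c'.
Proof.
 intros HV [phi [Hper [Hcont [Hsub _]]]] xs.
 apply Rnot_lt_le; intro Hlt.
 destruct (cont_eps V xs (HV xs) (V xs - c')) as [eta [Heta Hv]]; [lra|].
 set (g := fun z => phi z + P' * z).
 assert (Hg : forall z, continuous g z).
 { intro z; unfold g. apply c_plus; auto. apply c_mult. apply c_const. apply c_id. }
 destruct (continuity_ab_maj (fun z => Rabs (g z)) (xs-1) (xs+1)) as [m0 [Hm0 _]]. lra.
 intros; apply cont_pt, continuous_Rabs_comp; auto.
 set (M := Rabs (g m0)).
 set (et := Rmin (1/2) eta).
 assert (Het : 0 < et) by (unfold et; apply Rmin_pos; lra).
 assert (Het1 : et <= 1/2) by (unfold et; apply Rmin_l).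
 assert (Het2 : et <= eta) by (unfold et; apply Rmin_r).
 assert (HM : 0 <= M) by apply Rabs_pos.
 set (eps := et^2 / (2*M+1)).
 assert (Heps : 0 < eps) by (unfold eps; apply Rdiv_lt_0_compat; nra).
 set (hh := fun z => g z - (z - xs)^2 / eps).
 destruct (continuity_ab_maj hh (xs-1) (xs+1)) as [xe [Hxe Hxer]]. lra.
 { intros; apply cont_pt. unfold hh. apply c_minus; auto.
   apply c_mult. apply pt_cont. reg. apply c_const. }
 assert (Hd : (xe - xs)^2 <= 2*M*eps).
 { pose proof (Hxe xs ltac:(lra)) as H1. unfold hh in H1.
   pose proof (Hm0 xs ltac:(lra)). pose proof (Hm0 xe Hxer). fold M in H, H0.
   replace ((xs - xs)^2/eps) with 0 in H1 by (field; lra).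
   assert ((xe - xs)^2 / eps <= 2*M).
   { apply Rabs_le_between in H. apply Rabs_le_between in H0. lra. }
   replace ((xe-xs)^2) with (((xe - xs)^2/eps) * eps) by (field; lra). nra. }
 assert (Hc : Rabs (xe - xs) < et).
 { rewrite <- (Rabs_pos_eq et) by lra. apply Rsqr_lt_abs_0. unfold Rsqr.
   assert (2*M*eps < et^2).
   { unfold eps. replace (2*M*(et^2/(2*M+1))) with (et^2 * (2*M/(2*M+1))) by (field; lra).
     assert (2*M/(2*M+1) < 1). { apply (Rmult_lt_reg_r (2*M+1)). lra. unfold Rdiv. rewrite Rmult_assoc, Rinv_l by lra. lra. }
     assert (0 < et^2) by nra. nra. }
   simpl in *; lra. }
 set (psi := fun z => - P' * z + (z - xs)^2 / eps).
 assert (Hpsi : Defs.C1 psi).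
 { intro x; split. unfold psi; auto_derive; auto.
   apply (continuous_ext (fun z => - P' + 2*(z - xs)/eps)).
   intro z. symmetry. apply is_derive_unique. unfold psi. auto_derive; auto. field; lra.
   apply pt_cont. reg. }
 specialize (Hsub psi xe Hpsi).
 assert (Hloc : exists d, 0 < d /\ forall y, Rabs (y - xe) < d -> phi y - psi y <= phi xe - psi xe).
 { exists (1/2). split. lra. intros y Hy.
   apply Rabs_def2 in Hy. apply Rabs_def2 in Hc.
   replace (phi y - psi y) with (hh y) by (unfold hh, g, psi; ring).
   replace (phi xe - psi xe) with (hh xe) by (unfold hh, g, psi; ring).
   apply Hxe. lra. }
 specialize (Hsub Hloc). unfold Ham in Hsub.
 assert (V xe <= c'). { pose proof (pow2_ge_0 (P' + Derive psi xe)). lra. }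
 assert (Rabs (xe - xs) < eta) by lra.
 specialize (Hv xe H0). apply Rabs_def2 in Hv. lra.
Qed.

Lemma pplus_cont V c : (forall x, continuous V x) -> forall x, continuous (pplus V c) x.
Proof. intros HV x. unfold pplus. apply (continuous_sqrt_comp (fun x => 2 * (c - V x))).
 apply c_mult. apply c_const. apply c_minus. apply c_const. auto. Qed.

Lemma pplus_per V c : periodic1 V -> periodic1 (pplus V c).
Proof. intros H x. unfold pplus. rewrite H. auto. Qed.

Lemma RInt_const1 (k:R) : RInt (fun _ : R => k) (-1/2) (1/2) = k.
Proof. rewrite RInt_const. unfold scal; simpl; unfold mult; simpl. change (((1/2) - (-1/2)) * k = k). field. Qed.

Lemma RInt_le_full (f g : R -> R) : (forall x, continuous f x) -> (forall x, continuous g x) ->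
  (forall x, f x <= g x) -> RInt f (-1/2) (1/2) <= RInt g (-1/2) (1/2).
Proof. intros. apply RInt_le. lra. apply exRI; auto. apply exRI; auto. intros; auto. Qed.

Lemma sub_bound V P' c' : (forall x, continuous V x) -> periodic1 V -> cell_solvable V P' c' ->
  (forall x, V x <= c') -> P' <= RInt (pplus V c') (-1/2) (1/2).
Proof.
 intros HV HVp [phi [Hper [Hcont [Hsub _]]]] Hle.
 apply Rnot_lt_le; intro Hlt. set (I0 := RInt (pplus V c') (-1/2) (1/2)) in *.
 set (k := (P' - I0)/2). assert (Hk: 0 < k) by (unfold k; lra).
 set (eps := k^2/2). assert (Heps : 0 < eps) by (unfold eps; nra).
 set (pe := fun x => sqrt (2*(c' + eps - V x))).
 assert (Hpec : forall x, continuous pe x).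
 { intro x. unfold pe. apply (continuous_sqrt_comp (fun x => 2 * (c' + eps - V x))).
   apply c_mult. apply c_const. apply c_minus. apply c_const. auto. }
 assert (Hpep : periodic1 pe) by (intro x; unfold pe; rewrite HVp; auto).
 assert (Hpelo : forall x, k <= pe x).
 { intro x. unfold pe. rewrite <- (sqrt_pow2 k) by lra. apply sqrt_le_1_alt.
   specialize (Hle x). unfold eps in *. lra. }
 assert (Hpeup : forall x, pe x <= pplus V c' x + k).
 { intro x. unfold pe, pplus. specialize (Hle x).
   set (s := sqrt (2 * (c' - V x))).
   assert (Hs0 : 0 <= s) by apply sqrt_pos.
   assert (Hs2 : s^2 = 2*(c' - V x)) by (apply pow2_sqrt; lra).
   rewrite <- (sqrt_pow2 (s + k)) by lra. apply sqrt_le_1_alt. unfold eps. nra. }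
 set (Ie := RInt pe (-1/2) (1/2)).
 assert (HIe1 : k <= Ie).
 { unfold Ie. rewrite <- (RInt_const1 k) at 1. apply RInt_le_full; auto. intro; apply c_const. }
 assert (HIe2 : Ie <= I0 + k).
 { unfold Ie, I0. rewrite <- (RInt_const1 k).
   rewrite <- (RInt_plus (V:=R_CompleteNormedModule)). apply RInt_le_full; auto.
   intro; apply c_plus. apply pplus_cont; auto. apply c_const.
   apply exRI, pplus_cont; auto. apply exRI; intro; apply c_const. }
 set (lam := P' / Ie).
 assert (HlI : lam * Ie = P') by (unfold lam; field; lra).
 assert (Hlam : 1 < lam) by (unfold k in *; nra).
 destruct (testfun pe lam P' Hpep Hpec HlI) as [HC1 [HD Hpp]].
 set (psi := fun z => lam * RInt pe 0 z - P' * z) in *.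
 destruct (per_max (fun z => phi z - psi z)) as [x0 Hx0].
 { intro z. rewrite Hper, Hpp. auto. }
 { intro z. apply c_minus; auto. apply ex_der_cont. apply (HC1 z). }
 specialize (Hsub psi x0 HC1).
 assert (Hloc : exists d, 0 < d /\ forall y, Rabs (y - x0) < d -> phi y - psi y <= phi x0 - psi x0).
 { exists 1. split. lra. intros; apply Hx0. }
 specialize (Hsub Hloc). unfold Ham in Hsub. rewrite HD in Hsub.
 replace (P' + (lam * pe x0 - P')) with (lam * pe x0) in Hsub by ring.
 assert (Hp2 : pe x0 ^ 2 = 2*(c' + eps - V x0)) by (unfold pe; apply pow2_sqrt; specialize (Hle x0); lra).
 specialize (Hle x0).
 assert (Hl2 : 1 < lam^2) by nra.
 assert (1/2 * (lam * pe x0)^2 = lam^2 * (c' + eps - V x0)) by (rewrite Rpow_mult_distr, Hp2; field).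
 nra.
Qed.

Lemma super_bound V P' c' : (forall x, continuous V x) -> periodic1 V -> cell_solvable V P' c' ->
  0 <= P' -> (forall x, V x < c') -> RInt (pplus V c') (-1/2) (1/2) <= P'.
Proof.
 intros HV HVp [phi [Hper [Hcont [_ Hsup]]]] HP Hlt.
 apply Rnot_lt_le; intro Hgt. set (I := RInt (pplus V c') (-1/2) (1/2)) in *.
 set (lam := P' / I).
 assert (HlI : lam * I = P') by (unfold lam; field; lra).
 assert (Hlam0 : 0 <= lam) by (unfold lam; apply Rmult_le_pos; [lra| left; apply Rinv_0_lt_compat; lra]).
 assert (Hlam : lam < 1) by nra.
 destruct (testfun (pplus V c') lam P' (pplus_per V c' HVp) (pplus_cont V c' HV) HlI) as [HC1 [HD Hpp]].
 set (psi := fun z => lam * RInt (pplus V c') 0 z - P' * z) in *.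
 destruct (per_min (fun z => phi z - psi z)) as [x0 Hx0].
 { intro z. rewrite Hper, Hpp. auto. }
 { intro z. apply c_minus; auto. apply ex_der_cont. apply (HC1 z). }
 specialize (Hsup psi x0 HC1).
 assert (Hloc : exists d, 0 < d /\ forall y, Rabs (y - x0) < d -> phi x0 - psi x0 <= phi y - psi y).
 { exists 1. split. lra. intros; apply Hx0. }
 specialize (Hsup Hloc). unfold Ham in Hsup. rewrite HD in Hsup.
 replace (P' + (lam * pplus V c' x0 - P')) with (lam * pplus V c' x0) in Hsup by ring.
 specialize (Hlt x0).
 assert (Hp2 : pplus V c' x0 ^ 2 = 2*(c' - V x0)) by (unfold pplus; apply pow2_sqrt; lra).
 assert (Hl2 : lam^2 < 1) by nra.
 assert (1/2 * (lam * pplus V c' x0)^2 = lam^2 * (c' - V x0)) by (rewrite Rpow_mult_distr, Hp2; field).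
 nra.
Qed.

Lemma identify_c V P c : (forall x, continuous V x) -> periodic1 V -> above_Pcrit V P ->
  cell_solvable V P c ->
  exists d, 0 < d /\ (forall x, d <= c - V x) /\ RInt (pplus V c) (-1/2) (1/2) = P.
Proof.
 intros HV HVp [Q [[HQ0 HQP] [cQ [R0 [cR [HsQ [HsR HcR]]]]]]] Hs.
 pose proof (claim1 V R0 cR HV HsR) as HVR.
 assert (HcQV : forall x, V x < cQ) by (intro x; specialize (HVR x); lra).
 pose proof (super_bound V Q cQ HV HVp HsQ HQ0 HcQV) as HQb.
 pose proof (claim1 V P c HV Hs) as HVc.
 pose proof (sub_bound V P c HV HVp Hs HVc) as HPb.
 assert (Hc : cQ < c).
 { apply Rnot_le_lt; intro Hle.
   assert (RInt (pplus V c) (-1/2) (1/2) <= RInt (pplus V cQ) (-1/2) (1/2)).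
   { apply RInt_le_full; try apply pplus_cont; auto. intro x; unfold pplus.
     apply sqrt_le_1_alt. lra. }
   lra. }
 exists (c - cR). split. lra. split. intro x; specialize (HVR x); lra.
 apply Rle_antisym; auto. apply super_bound; auto. lra. intro x; specialize (HVR x); lra.
Qed.


Lemma fold_seq (f : nat -> R) n : forall s, fold_right Rplus 0 (map f (seq s (S n))) = sum_f_R0 (fun i => f (s + i)%nat) n.
Proof. induction n; intro s.
 - simpl. rewrite Nat.add_0_r. ring.
 - change (f s + fold_right Rplus 0 (map f (seq (S s) (S n))) = sum_f_R0 (fun i => f (s + i)%nat) (S n)).
   rewrite IHn. rewrite (decomp_sum (fun i => f (s + i)%nat) (S n)) by lia. simpl pred.
   rewrite Nat.add_0_r. f_equal. apply sum_eq; intros. f_equal. lia. Qed.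

Lemma C_conv (A : nat -> R) (v : nat -> R -> R) x k : (1 <= k)%nat ->
  (forall i, (1 <= i)%nat -> A i = Derive (v i) x) ->
  sum_f_R0 (fun p => A p * A (k - p)%nat) k = 2 * A 0%nat * A k + conv_sum v k x.
Proof. intros Hk HA. destruct k as [|k]; [lia|]. destruct k as [|k].
 - unfold conv_sum; simpl. ring.
 - rewrite tech5. rewrite decomp_sum by lia. simpl pred.
   unfold conv_sum. replace (S (S k) - 1)%nat with (S k) by lia. rewrite fold_seq.
   replace (S (S k) - 0)%nat with (S (S k)) by lia. replace (S (S k) - S (S k))%nat with 0%nat by lia.
   assert (sum_f_R0 (fun i => A (S i) * A (S (S k) - S i)%nat) k =
     sum_f_R0 (fun i => Derive (v (1 + i)%nat) x * Derive (v (S (S k) - (1 + i))%nat) x) k).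
   { apply sum_eq; intros i Hi. rewrite !HA by lia. f_equal. }
   rewrite H. ring. Qed.

Lemma pow_le1 h n : 0 <= h <= 1 -> h ^ n <= 1.
Proof. intros. rewrite <- (pow1 n). apply pow_incr. lra. Qed.
Lemma pow_mono h m n : 0 <= h <= 1 -> (m <= n)%nat -> h ^ n <= h ^ m.
Proof. intros Hh Hmn. replace n with (m + (n - m))%nat by lia. rewrite pow_add.
 pose proof (pow_le1 h (n-m) Hh). pose proof (pow_le h m (proj1 Hh)). nra. Qed.

Lemma cauchy_tail (a : nat -> R) h B N : 0 <= h <= 1 -> (forall i, (i <= N)%nat -> Rabs (a i) <= B) ->
  exists T, (sum_f_R0 (fun i => h^i * a i) N)^2 =
     sum_f_R0 (fun k => h^k * sum_f_R0 (fun p => a p * a (k - p)%nat) k) N + T /\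
     Rabs T <= INR (S N) * INR (S N) * (B * B) * h ^ (S N).
Proof.
 intros Hh HB. assert (HB0 : 0 <= B) by (specialize (HB 0%nat (Nat.le_0_l _)); pose proof (Rabs_pos (a 0%nat)); lra).
 destruct N as [|N].
 - exists 0. simpl. split. ring. rewrite Rabs_R0. nra.
 - set (b := fun i => h^i * a i).
   exists (sum_f_R0 (fun k => sum_f_R0 (fun l => b (S (l + k)) * b (S N - l)%nat) (pred (S N - k))) (pred (S N))).
   split.
   + replace ((sum_f_R0 b (S N))^2) with (sum_f_R0 b (S N) * sum_f_R0 b (S N)) by ring.
     rewrite cauchy_finite by lia. f_equal. apply sum_eq; intros k Hk. rewrite scal_sum.
     apply sum_eq; intros p Hp. unfold b.
     replace (h^k) with (h^p * h^(k-p)) by (rewrite <- pow_add; f_equal; lia). ring.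
   + set (c := B*B*h^(S (S N))).
     assert (Hc0 : 0 <= c) by (unfold c; apply Rmult_le_pos; [nra | apply pow_le; lra]).
     eapply Rle_trans. apply sum_f_R0_triangle.
     eapply Rle_trans. apply sum_Rle with (Bn := fun k => INR (S (S N)) * c). intros k Hk.
     { eapply Rle_trans. apply sum_f_R0_triangle.
       eapply Rle_trans. apply sum_Rle with (Bn := fun _ => c). intros l Hl.
       { unfold b. rewrite Rabs_mult, !Rabs_mult.
         rewrite (Rabs_pos_eq (h ^ S (l + k))) by (apply pow_le; lra).
         rewrite (Rabs_pos_eq (h ^ (S N - l))) by (apply pow_le; lra).
         pose proof (HB (S (l+k)) ltac:(lia)). pose proof (HB (S N - l)%nat ltac:(lia)).
         pose proof (Rabs_pos (a (S (l + k)))). pose proof (Rabs_pos (a (S N - l)%nat)).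
         assert (Hp : h ^ S (l + k) * h ^ (S N - l) <= h ^ (S (S N))).
         { rewrite <- pow_add. apply pow_mono; auto. lia. }
         pose proof (pow_le h (S (l+k)) ltac:(lra)). pose proof (pow_le h (S N - l) ltac:(lra)).
         unfold c.
         apply Rle_trans with (h ^ S (l + k) * h ^ (S N - l) * (B * B)).
         { assert (Rabs (a (S (l + k))) * Rabs (a (S N - l)%nat) <= B * B) by (apply Rmult_le_compat; auto).
           assert (0 <= h ^ S (l + k) * h ^ (S N - l)) by nra. nra. }
         nra. }
       rewrite sum_cte. assert (INR (S (pred (S N - k))) <= INR (S (S N))) by (apply le_INR; lia). nra. }
     rewrite sum_cte. assert (INR (S (pred (S N))) <= INR (S (S N))) by (apply le_INR; lia).
     pose proof (pos_INR (S (S N))).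
     apply Rle_trans with (INR (S (S N)) * c * INR (S (S N))).
     apply Rmult_le_compat_l; auto. apply Rmult_le_pos; auto.
     unfold c; right; ring.
Qed.

Lemma H_series (dA Hs C : nat -> R) (h c Vx : R) N :
  Hs 0%nat = c -> c = C 0%nat / 2 + Vx ->
  (forall j, (1 <= j)%nat -> Hs j = C j / 2 - dA (j-1)%nat / 2) ->
  sum_f_R0 (fun j => h^j * Hs j) N = sum_f_R0 (fun j => h^j * C j / 2) N + Vx
     - 1/2 * sum_f_R0 (fun j => h^(S j) * dA j) N + 1/2 * h^(S N) * dA N.
Proof. intros H0 Hc Hj. induction N.
 - simpl. rewrite H0, Hc. field.
 - rewrite !tech5. rewrite IHN. rewrite (Hj (S N)) by lia. replace (S N - 1)%nat with N by lia.
   simpl. field. Qed.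

Lemma resid_bound (A dA Hs : nat -> R) h c Vx B N : 0 <= h <= 1 ->
  (forall i, (i <= N)%nat -> Rabs (A i) <= B /\ Rabs (dA i) <= B) ->
  Hs 0%nat = c -> c = A 0%nat * A 0%nat / 2 + Vx ->
  (forall j, (1 <= j)%nat -> Hs j = sum_f_R0 (fun p => A p * A (j - p)%nat) j / 2 - dA (j-1)%nat / 2) ->
  Rabs (- h / 2 * sum_f_R0 (fun j => h^j * dA j) N + 1/2 * (sum_f_R0 (fun j => h^j * A j) N)^2 + Vx
        - sum_f_R0 (fun j => h^j * Hs j) N) <= (INR (S N) * INR (S N) * (B * B) + B) * h ^ (S N).
Proof. intros Hh HB H0 Hc Hj.
 destruct (cauchy_tail A h B N Hh) as [T [HT HTb]]. intros i Hi; apply (HB i Hi).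
 rewrite HT.
 rewrite (H_series dA Hs (fun k => sum_f_R0 (fun p => A p * A (k - p)%nat) k) h c Vx N H0) by (simpl; auto; lra).
 assert (E1 : h * sum_f_R0 (fun j => h^j * dA j) N = sum_f_R0 (fun j => h^(S j) * dA j) N).
 { rewrite scal_sum. apply sum_eq; intros. simpl. ring. }
 assert (E2 : sum_f_R0 (fun k => h^k * sum_f_R0 (fun p => A p * A (k - p)%nat) k) N =
   2 * sum_f_R0 (fun j => h^j * sum_f_R0 (fun p => A p * A (j - p)%nat) j / 2) N).
 { rewrite scal_sum. apply sum_eq; intros. field. }
 replace (- h / 2 * sum_f_R0 (fun j => h^j * dA j) N) with (-1/2 * (h * sum_f_R0 (fun j => h^j * dA j) N)) by field.
 rewrite E1, E2.
 match goal with |- Rabs ?X <= _ => replace X with (T/2 - 1/2 * h^(S N) * dA N) by field end.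
 destruct (HB N (le_n N)) as [_ HdN].
 pose proof (pow_le h (S N) ltac:(lra)).
 eapply Rle_trans. apply Rabs_triang. rewrite Rabs_Ropp.
 unfold Rdiv. rewrite !Rabs_mult. rewrite (Rabs_pos_eq (h ^ S N)) by lra.
 rewrite (Rabs_pos_eq (/2)) by lra. rewrite Rabs_R1.
 assert (Rabs (dA N) * h ^ S N <= B * h ^ S N) by (apply Rmult_le_compat_r; lra).
 assert (0 <= B) by (pose proof (Rabs_pos (dA N)); lra).
 assert (0 <= INR (S N) * INR (S N) * (B*B) * h^ S N) by (pose proof (pos_INR (S N)); apply Rmult_le_pos; [|lra]; apply Rmult_le_pos; nra).
 nra.
Qed.


Lemma per_deriv f : periodic1 f -> periodic1 (Derive f).
Proof. intros H x. unfold Derive. f_equal. apply Lim_ext. intro y.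
 replace (x + 1 + y) with ((x + y) + 1) by ring. rewrite !H. auto. Qed.

Lemma no_zero_cross (u du : R -> R) y0 : (forall x, is_derive u x (du x)) -> periodic1 u ->
  0 < u y0 -> (forall x, u x = 0 -> du x < 0) -> forall x, 0 < u x.
Proof.
 intros Hd Hp Hy0 Hz x. apply Rnot_le_lt; intro Hx0.
 assert (Hc : forall t, continuous u t) by (intro t; apply ex_der_cont; eexists; apply Hd).
 set (k := up (x - y0)). set (y := y0 + IZR k).
 assert (Hxy : x < y) by (unfold y, k; destruct (archimed (x - y0)); lra).
 assert (Huy : 0 < u y) by (unfold y; rewrite per_Z; auto).
 set (E := fun t => x <= t <= y /\ u t <= 0).
 destruct (completeness E) as [z [Hub Hlub]].
 { exists y. intros t [Ht _]. lra. }
 { exists x. split; lra. }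
 assert (Hxz : x <= z) by (apply Hub; split; lra).
 assert (Hzy : z <= y) by (apply Hlub; intros t [Ht _]; lra).
 assert (K : forall t, z < t <= y -> u t <= 0 -> False).
 { intros t Ht Hu. assert (t <= z) by (apply Hub; split; lra). lra. }
 assert (Huz : u z <= 0).
 { apply Rnot_lt_le; intro Hp0.
   destruct (cont_eps u z (Hc z) (u z) Hp0) as [d [Hd0 Hdd]].
   assert (z <= z - d/2); [|lra].
   apply Hlub. intros t [Ht1 Ht2].
   assert (t <= z) by (apply Hub; split; auto).
   apply Rnot_lt_le; intro Hlt.
   assert (Rabs (t - z) < d) by (apply Rabs_def1; lra).
   specialize (Hdd t H0). apply Rabs_def2 in Hdd. lra. }
 assert (Hzy' : z < y) by (destruct Hzy; auto; subst; lra).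
 assert (Hu0 : u z = 0).
 { destruct Huz as [Hn|]; auto. exfalso.
   destruct (cont_eps u z (Hc z) (- u z)) as [d [Hd0 Hdd]]; [lra|].
   set (t := z + Rmin d (y - z) / 2).
   assert (Hm1 : Rmin d (y - z) <= d) by apply Rmin_l.
   assert (Hm2 : Rmin d (y - z) <= y - z) by apply Rmin_r.
   assert (Hm0 : 0 < Rmin d (y - z)) by (apply Rmin_pos; lra).
   apply (K t). unfold t; lra.
   assert (Rabs (t - z) < d) by (unfold t; apply Rabs_def1; lra).
   specialize (Hdd t H). apply Rabs_def2 in Hdd. lra. }
 specialize (Hz z Hu0).
 pose proof (proj1 (is_derive_Reals u z (du z)) (Hd z)) as HL.
 destruct (HL (- du z)) as [del Hdel]; [lra|].
 set (k' := Rmin del (y - z) / 2).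
 assert (Hm1 : Rmin del (y - z) <= del) by apply Rmin_l.
 assert (Hm2 : Rmin del (y - z) <= y - z) by apply Rmin_r.
 assert (Hm0 : 0 < Rmin del (y - z)) by (apply Rmin_pos; [apply cond_pos | lra]).
 assert (Hk0 : 0 < k') by (unfold k'; lra).
 specialize (Hdel k' ltac:(lra) ltac:(apply Rabs_def1; unfold k'; pose proof (cond_pos del); lra)).
 apply Rabs_def2 in Hdel. destruct Hdel as [Hdel _].
 apply (K (z + k')). unfold k'; lra.
 rewrite Hu0 in Hdel.
 assert (Hq : (u (z + k') - 0) / k' < 0) by lra.
 replace (u (z + k')) with ((u (z + k') - 0) / k' * k') by (field; lra). nra.
Qed.

Lemma L2T_bound (e : R -> R) E : (forall x, continuous e x) -> (forall x, Rabs (e x) <= E) -> L2T e <= E.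
Proof. intros Hc Hb. unfold L2T.
 assert (HE : 0 <= E) by (pose proof (Hb 0); pose proof (Rabs_pos (e 0)); lra).
 rewrite <- (sqrt_pow2 E HE). apply sqrt_le_1_alt.
 rewrite <- (RInt_const1 (E^2)). apply RInt_le_full.
 intro x. apply (continuous_ext (fun x => e x * (e x * 1))). intro; simpl; auto.
 apply c_mult; auto. apply c_mult; auto. apply c_const.
 intro; apply c_const.
 intro x. specialize (Hb x).
 replace (e x ^ 2) with (Rabs (e x) ^ 2) by (rewrite <- Rsqr_pow2, <- Rsqr_abs, Rsqr_pow2; auto).
 apply pow_incr. split; auto. apply Rabs_pos. Qed.

Lemma pow_Rpower h N : 0 < h < 1 -> h ^ (N + 1) <= Rpower h (INR (N + 1) / 2).
Proof. intros Hh. rewrite <- Rpower_pow by lra. unfold Rpower.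
 assert (ln h < 0) by (rewrite <- ln_1; apply ln_increasing; lra).
 pose proof (pos_INR (N+1)).
 destruct (Req_dec (INR (N+1)) 0) as [E|E].
 - rewrite E. right. f_equal. field.
 - left. apply exp_increasing. assert (0 < INR (N+1)) by lra. nra. Qed.


Lemma sum_derive (f : nat -> R -> R) (df : nat -> R -> R) h n x :
  (forall j, is_derive (f j) x (df j x)) ->
  is_derive (fun y => sum_f_R0 (fun j => h^j * f j y) n) x (sum_f_R0 (fun j => h^j * df j x) n).
Proof. intro H. induction n.
 - apply (is_derive_ext (fun y => h^0 * f 0%nat y)). intro; reflexivity. apply is_derive_scal, H.
 - apply (is_derive_ext (fun y => sum_f_R0 (fun j => h^j * f j y) n + h^(S n) * f (S n) y)).
   intro; reflexivity. apply isd_plus; auto. apply is_derive_scal, H. Qed.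

Lemma hatv_per v h n : (forall j, periodic1 (v j)) -> periodic1 (hatv v h n).
Proof. intros H x; unfold hatv; apply sum_eq; intros; rewrite (H i); auto. Qed.

Lemma sum_shift_P (A D : nat -> R) P h n : D 0%nat = A 0%nat - P -> (forall j, (1 <= j)%nat -> D j = A j) ->
  P + sum_f_R0 (fun j => h^j * D j) n = sum_f_R0 (fun j => h^j * A j) n.
Proof. intros H0 Hj. induction n. simpl. rewrite H0; ring.
 rewrite !tech5, <- IHn, Hj by lia. ring. Qed.

Lemma sum_close (A : nat -> R) a0 h B n : 0 <= h <= 1 -> A 0%nat = a0 -> (forall j, (j <= n)%nat -> Rabs (A j) <= B) ->
  Rabs (sum_f_R0 (fun j => h^j * A j) n - a0) <= h * (INR (S n) * B).
Proof. intros Hh H0 HB.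
 assert (HB0 : 0 <= B) by (pose proof (HB 0%nat ltac:(lia)); pose proof (Rabs_pos (A 0%nat)); lra).
 induction n.
 - simpl. rewrite H0. replace (1 * a0 - a0) with 0 by ring. rewrite Rabs_R0. nra.
 - rewrite tech5. replace (sum_f_R0 (fun j => h ^ j * A j) n + h ^ S n * A (S n) - a0)
     with ((sum_f_R0 (fun j => h ^ j * A j) n - a0) + h ^ S n * A (S n)) by ring.
   eapply Rle_trans. apply Rabs_triang.
   assert (IH := IHn ltac:(intros; apply HB; lia)).
   rewrite Rabs_mult, (Rabs_pos_eq (h ^ S n)) by (apply pow_le; lra).
   assert (h ^ S n <= h) by (rewrite <- (pow_1 h) at 2; apply pow_mono; auto; lia).
   pose proof (HB (S n) (le_n _)). pose proof (Rabs_pos (A (S n))).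
   pose proof (pow_le h (S n) ltac:(lra)).
   assert (h ^ S n * Rabs (A (S n)) <= h * B) by (apply Rmult_le_compat; lra).
   rewrite S_INR. nra. Qed.

Lemma bound_family (a da : nat -> R -> R) n : (forall i, periodic1 (a i)) -> (forall i, periodic1 (da i)) ->
  (forall i x, continuous (a i) x) -> (forall i x, continuous (da i) x) ->
  exists B, forall i, (i <= n)%nat -> forall x, Rabs (a i x) <= B /\ Rabs (da i x) <= B.
Proof. intros Hap Hdp Hac Hdc. induction n.
 - destruct (per_bound (a 0%nat) (Hap 0%nat) (Hac 0%nat)) as [B1 H1].
   destruct (per_bound (da 0%nat) (Hdp 0%nat) (Hdc 0%nat)) as [B2 H2].
   exists (Rmax B1 B2). intros i Hi x. replace i with 0%nat by lia. split.
   eapply Rle_trans; [apply H1|apply Rmax_l]. eapply Rle_trans; [apply H2|apply Rmax_r].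
 - destruct IHn as [B HB].
   destruct (per_bound (a (S n)) (Hap _) (Hac _)) as [B1 H1].
   destruct (per_bound (da (S n)) (Hdp _) (Hdc _)) as [B2 H2].
   exists (Rmax B (Rmax B1 B2)). intros i Hi x.
   pose proof (Rmax_l B (Rmax B1 B2)). pose proof (Rmax_r B (Rmax B1 B2)).
   pose proof (Rmax_l B1 B2). pose proof (Rmax_r B1 B2).
   destruct (Nat.eq_dec i (S n)) as [->|Hne].
   + specialize (H1 x); specialize (H2 x). split; lra.
   + destruct (HB i ltac:(lia) x). split; lra. Qed.

Lemma fin_bound (f : nat -> R) n : exists B, forall i, (i <= n)%nat -> Rabs (f i) <= B.
Proof. induction n.
 - exists (Rabs (f 0%nat)). intros i Hi. replace i with 0%nat by lia. lra.
 - destruct IHn as [B HB]. exists (Rmax B (Rabs (f (S n)))). intros i Hi.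
   destruct (Nat.eq_dec i (S n)) as [->|Hne]. apply Rmax_r.
   eapply Rle_trans. apply HB; lia. apply Rmax_l. Qed.

Lemma isd_const (k x : R) : is_derive (fun _ : R => k) x 0.
Proof. exact (is_derive_const (K:=R_AbsRing) k x). Qed.


Theorem mainTheorem5 :
  forall (V : R -> R),
    smooth V -> periodic1 V -> (forall x, V (- x) = V x) ->
    (forall x, -1/2 <= x < 1/2 -> x <> 0 -> V 0 < V x) ->
    0 < Derive_n V 2 0 ->
  forall (P c : R),
    above_Pcrit V P ->
    cell_solvable V P c ->
  forall (v : nat -> R -> R) (Hs : nat -> R),
    (forall x, v 0%nat x = v0 V P c x) ->
    Hs 0%nat = c ->
    (forall j : nat, (1 <= j)%nat ->
       Hs j = RInt (fun x => (-1/2 * Derive_n (v (j - 1)%nat) 2 x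
                               + 1/2 * conv_sum v j x) * sigma0 V c x) (-1/2) (1/2)
       /\ smooth (v j) /\ periodic1 (v j)
       /\ forall x, -1/2 * Derive_n (v (j - 1)%nat) 2 x + pplus V c x * Derive (v j) x
                    + 1/2 * conv_sum v j x = Hs j) ->
  forall (vh : R -> R -> R) (Hh : R -> R),
    (forall h, 0 < h ->
       periodic1 (vh h) /\
       (forall x, ex_derive (vh h) x /\ ex_derive (Derive (vh h)) x) /\
       (forall x, - h / 2 * Derive (Derive (vh h)) x
                  + 1/2 * (P + Derive (vh h) x) ^ 2 + V x = Hh h)) ->
  forall N : nat,
    exists C h0, 0 < h0 /\
      forall h, 0 < h < h0 ->
        L2T (fun x => Derive (vh h) x - Derive (hatv v h N) x)
          <= C * Rpower h (INR (N + 1) / 2).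
Proof.
 intros V HVs HVp _ _ _ P c Habove Hcell v Hs Hv0 Hs0 Hj vh Hh Hvh N.
 pose proof (smooth_cont V HVs) as HVc.
 destruct (identify_c V P c HVc HVp Habove Hcell) as [d [Hd0 [Hdc HIP]]].
 assert (Hpc : forall x, continuous (pplus V c) x) by (apply pplus_cont; auto).
 assert (Hpp : periodic1 (pplus V c)) by (apply pplus_per; auto).
 set (p := pplus V c) in *.
 assert (Hp2 : forall x, p x ^ 2 = 2 * (c - V x)).
 { intro x; unfold p, pplus; apply pow2_sqrt; specialize (Hdc x); lra. }
 set (m := sqrt (2*d)).
 assert (Hm : 0 < m) by (apply sqrt_lt_R0; lra).
 assert (Hpm : forall x, m <= p x).
 { intro x; unfold m, p, pplus; apply sqrt_le_1_alt; specialize (Hdc x); lra. }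
 assert (HVd : forall x, ex_derive V x) by (intro x; exact (HVs 1%nat x)).
 assert (Hpd : forall x, is_derive p x (- Derive V x / p x)).
 { intro x. unfold p, pplus.
   assert (H1 : is_derive (fun x => 2 * (c - V x)) x (2 * (0 - Derive V x))).
   { apply is_derive_scal. apply isd_minus. apply (is_derive_const (K:=R_AbsRing) c). apply Derive_correct, HVd. }
   pose proof (is_derive_sqrt _ x _ H1) as H2. 
   replace (- Derive V x / sqrt (2 * (c - V x))) with (2 * (0 - Derive V x) / (2 * sqrt (2 * (c - V x)))).
   apply H2. specialize (Hdc x); lra.
   field. apply Rgt_not_eq. apply sqrt_lt_R0. specialize (Hdc x); lra. }
 assert (Hv0d : forall x, is_derive (v 0%nat) x (p x - P)).
 { intro x. apply (is_derive_ext (v0 V P c)). intro; rewrite Hv0; auto.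
   unfold v0. apply isd_minus. apply is_derive_RInt0; auto. auto_derive; auto; ring. }
 assert (Hv0per : periodic1 (v 0%nat)).
 { intro x. rewrite !Hv0. unfold v0. fold p.
   assert (E : forall a b, ex_RInt p a b) by (apply exRI; auto).
   assert (Ch : forall y, RInt p (-1/2) y = RInt p (-1/2) 0 + RInt p 0 y).
   { intro y. symmetry. exact (RInt_Chasles p (-1/2) 0 y (E _ _) (E _ _)). }
   rewrite (Ch (x+1)), (Ch x). pose proof (per_int p Hpp Hpc x). fold p in HIP. lra. }

 assert (Hvs : forall j, (1 <= j)%nat -> smooth (v j)) by (intros j Hj1; apply (Hj j Hj1)).
 assert (Hvper : forall j, periodic1 (v j)).
 { intro j; destruct j. auto. apply (Hj (S j)); lia. }
 assert (Hvd : forall j x, ex_derive (v j) x).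
 { intros j x; destruct j. eexists; apply Hv0d. exact (Hvs (S j) ltac:(lia) 1%nat x). }
 set (a := fun (i:nat) (x:R) => match i with O => p x | S _ => Derive (v i) x end).
 set (da := fun (i:nat) (x:R) => match i with O => Derive p x | S _ => Derive (Derive (v i)) x end).
 assert (Hadd : forall i x, is_derive (a i) x (da i x)).
 { intros i x; destruct i; unfold a, da; cbv beta iota. apply Derive_correct. eexists; apply Hpd.
   apply Derive_correct. exact (Hvs (S i) ltac:(lia) 2%nat x). }
 assert (Hdp : forall x, Derive p x = - Derive V x / p x) by (intro; apply is_derive_unique, Hpd).
 assert (HdVc : forall x, continuous (Derive V) x) by (intro x; apply ex_der_cont; exact (HVs 2%nat x)).
 assert (Hdac : forall i x, continuous (da i) x).
 { intros i x; destruct i; unfold a, da; cbv beta iota.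
   - apply (continuous_ext (fun x => - Derive V x / p x)). intro; rewrite Hdp; auto.
     apply pt_cont. apply (continuity_pt_div (fun y => - Derive V y) p x).
     apply continuity_pt_opp; apply cont_pt; auto. apply cont_pt; auto. specialize (Hpm x); lra.
   - apply ex_der_cont. exact (Hvs (S i) ltac:(lia) 3%nat x). }
 assert (Hac : forall i x, continuous (a i) x) by (intros; apply ex_der_cont; eexists; apply Hadd).
 assert (Haper : forall i, periodic1 (a i)).
 { intros i x; destruct i; unfold a, da; cbv beta iota. apply Hpp. apply (per_deriv (v (S i))); auto. }
 assert (Hdaper : forall i, periodic1 (da i)).
 { intros i x; destruct i; unfold a, da; cbv beta iota. apply (per_deriv p Hpp). apply (per_deriv (Derive (v (S i)))), per_deriv; auto. }
 assert (Heq : forall j, (1 <= j)%nat -> forall x, Hs j = sum_f_R0 (fun q => a q x * a (j - q)%nat x) j / 2 - da (j-1)%nat x / 2).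
 { intros j Hj1 x. destruct (Hj j Hj1) as [_ [_ [_ HE]]]. rewrite <- (HE x).
   rewrite (C_conv (fun q => a q x) v x j Hj1).
   2:{ intros i Hi; destruct i; [lia|]; reflexivity. }
   assert (Hn : Derive_n (v (j-1)%nat) 2 x = da (j-1)%nat x).
   { destruct (j-1)%nat as [|k] eqn:Ek.
     - simpl. transitivity (Derive (fun y => p y - P) x).
       apply Derive_ext. intro t. apply is_derive_unique, (Hv0d t).
       apply is_derive_unique. replace (Derive p x) with (Derive p x - 0) by ring.
       apply isd_minus. apply Derive_correct; eexists; apply Hpd. apply isd_const.
     - reflexivity. }
   rewrite Hn. destruct j; [lia|]. unfold a; cbv beta iota. field. }
 assert (HhatD : forall h x, is_derive (hatv v h N) x (sum_f_R0 (fun j => h^j * Derive (v j) x) N)).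
 { intros h x. apply (is_derive_ext (fun y => sum_f_R0 (fun j => h^j * v j y) N)). intro; reflexivity.
   apply (sum_derive v (fun j x => Derive (v j) x)). intro j; apply Derive_correct, Hvd. }
 set (U := fun h x => sum_f_R0 (fun j => h^j * a j x) N).
 set (dU := fun h x => sum_f_R0 (fun j => h^j * da j x) N).
 assert (HU : forall h x, Derive (hatv v h N) x = U h x - P).
 { intros h x. rewrite (is_derive_unique _ _ _ (HhatD h x)). unfold U.
   rewrite <- (sum_shift_P (fun j => a j x) (fun j => Derive (v j) x) P h N). ring.
   simpl. apply is_derive_unique, Hv0d. intros j Hj1; destruct j; [lia|reflexivity]. }
 assert (HUd : forall h x, is_derive (U h) x (dU h x)).
 { intros h x. apply (sum_derive a da). intro; apply Hadd. }
 destruct (bound_family a da N Haper Hdaper Hac Hdac) as [B HB].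
 assert (HB0 : 0 <= B) by (destruct (HB 0%nat (Nat.le_0_l _) 0) as [H _]; pose proof (Rabs_pos (a 0%nat 0)); lra).
 destruct (fin_bound Hs N) as [BH HBH].
 assert (HBH0 : 0 <= BH) by (pose proof (HBH 0%nat (Nat.le_0_l _)); pose proof (Rabs_pos (Hs 0%nat)); lra).
 set (K := INR (S N) * INR (S N) * (B*B) + B).
 assert (HK : 0 <= K) by (unfold K; pose proof (pos_INR (S N)); nra).
 set (SH := INR (S N) * BH).
 assert (HSH : 0 <= SH) by (unfold SH; pose proof (pos_INR (S N)); nra).
 set (L := INR (S N) * B).
 assert (HL : 0 <= L) by (unfold L; pose proof (pos_INR (S N)); nra).
 set (h0 := Rmin 1 (Rmin (m / (2*(L+1))) (d / (SH + K + 1)))).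
 exists (8*K/m), h0. split.
 { unfold h0. apply Rmin_pos. lra. apply Rmin_pos; apply Rdiv_lt_0_compat; lra. }
 intros h [Hh0 Hhh0].
 assert (Hh1 : h < 1) by (pose proof (Rmin_l 1 (Rmin (m / (2*(L+1))) (d / (SH + K + 1)))); unfold h0 in *; lra).
 assert (HhL : h * (L+1) < m/2).
 { assert (h < m / (2*(L+1))).
   { pose proof (Rmin_r 1 (Rmin (m / (2*(L+1))) (d / (SH + K + 1)))).
     pose proof (Rmin_l (m / (2*(L+1))) (d / (SH + K + 1))). unfold h0 in *; lra. }
   apply Rmult_lt_compat_r with (r := L+1) in H; [|lra].
   replace (m / (2 * (L + 1)) * (L + 1)) with (m/2) in H by (field; lra). lra. }
 assert (HhK : h * (SH + K + 1) < d).
 { assert (h < d / (SH + K + 1)).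
   { pose proof (Rmin_r 1 (Rmin (m / (2*(L+1))) (d / (SH + K + 1)))).
     pose proof (Rmin_r (m / (2*(L+1))) (d / (SH + K + 1))). unfold h0 in *; lra. }
   apply Rmult_lt_compat_r with (r := SH+K+1) in H; [|lra].
   replace (d / (SH + K + 1) * (SH + K + 1)) with d in H by (field; lra). lra. }

 destruct (Hvh h Hh0) as [Hvhp [Hvhd Hvheq]].
 set (u := fun x => P + Derive (vh h) x).
 set (du := fun x => Derive (Derive (vh h)) x).
 set (Hhat := sum_f_R0 (fun j => h^j * Hs j) N).
 set (r := fun x => - h/2 * dU h x + 1/2 * (U h x)^2 + V x - Hhat).
 assert (Hr : forall x, Rabs (r x) <= K * h^(S N)).
 { intro x. unfold r, U, dU, Hhat, K.
   apply (resid_bound (fun i => a i x) (fun i => da i x) Hs h c (V x) B N).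
   lra. intros i Hi; apply HB; auto. auto.
   unfold a; cbv beta iota. pose proof (Hp2 x). simpl in H. lra.
   intros j Hj1. apply Heq; auto. }
 assert (HUp : forall x, Rabs (U h x - p x) <= h * L).
 { intro x. unfold U, L. apply sum_close. lra. reflexivity. intros j Hj2; apply HB; auto. }
 assert (HUm : forall x, m/2 <= U h x).
 { intro x. specialize (HUp x). apply Rabs_le_between in HUp. specialize (Hpm x). nra. }
 assert (HHc : Rabs (Hhat - c) <= h * SH).
 { unfold Hhat, SH. apply sum_close. lra. auto. auto. }
 set (e := fun x => Derive (vh h) x - Derive (hatv v h N) x).
 assert (He : forall x, e x = u x - U h x) by (intro; unfold e, u; rewrite HU; ring).
 assert (Hud : forall x, is_derive u x (du x)).
 { intro x. unfold u, du. replace (Derive (Derive (vh h)) x) with (0 + Derive (Derive (vh h)) x) by ring.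
   apply isd_plus. apply isd_const. apply Derive_correct, Hvhd. }
 assert (Hed : forall x, is_derive e x (du x - dU h x)).
 { intro x. apply (is_derive_ext (fun y => u y - U h y)). intro; rewrite He; auto. apply isd_minus; auto. }
 assert (Hec : forall x, continuous e x) by (intro; apply ex_der_cont; eexists; apply Hed).
 assert (Hep : periodic1 e).
 { intro x. unfold e. rewrite (per_deriv (vh h) Hvhp x), (per_deriv (hatv v h N) (hatv_per v h N Hvper) x). auto. }
 assert (Hz : exists z0, e z0 = 0).
 { set (F := fun x => vh h x - hatv v h N x).
   assert (HFd : forall x, is_derive F x (e x)).
   { intro x. unfold F, e. apply isd_minus. apply Derive_correct, Hvhd. apply Derive_correct. eexists; apply HhatD. }
   destruct (per_max F) as [z0 Hz0].
   { intro x; unfold F. rewrite Hvhp, (hatv_per v h N Hvper). auto. }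
   { intro x; apply ex_der_cont; eexists; apply HFd. }
   exists z0. rewrite <- (is_derive_unique _ _ _ (HFd z0)). apply deriv_zero_max; auto. eexists; apply HFd. }
 destruct Hz as [z0 Hz0].
 destruct (per_max e Hep Hec) as [x1 Hx1].
 destruct (per_min e Hep Hec) as [x2 Hx2].
 assert (Hdx1 : du x1 = dU h x1).
 { pose proof (deriv_zero_max e x1 (ex_intro _ _ (Hed x1)) Hx1) as H. rewrite (is_derive_unique _ _ _ (Hed x1)) in H. lra. }
 assert (Hdx2 : du x2 = dU h x2).
 { pose proof (deriv_zero_min e x2 (ex_intro _ _ (Hed x2)) Hx2) as H. rewrite (is_derive_unique _ _ _ (Hed x2)) in H. lra. }
 assert (Key : forall x, du x = dU h x -> e x * (u x + U h x) / 2 = (Hh h - Hhat) - r x).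
 { intros x Hx. rewrite He. pose proof (Hvheq x) as H. rewrite <- H. unfold r.
   change (Derive (Derive (vh h)) x) with (du x). change (P + Derive (vh h) x) with (u x).
   rewrite Hx. field. }
 set (D := Hh h - Hhat) in *.
 pose proof (Key x1 Hdx1) as K1. pose proof (Key x2 Hdx2) as K2.
 assert (He1 : 0 <= e x1) by (rewrite <- Hz0; apply Hx1).
 assert (He2 : e x2 <= 0) by (rewrite <- Hz0; apply Hx2).
 pose proof (HUm x1) as HU1. pose proof (HUm x2) as HU2.
 assert (Hu1 : u x1 = U h x1 + e x1) by (rewrite He; ring).
 pose proof (Hr x1) as Hr1. pose proof (Hr x2) as Hr2.
 apply Rabs_le_between in Hr1. apply Rabs_le_between in Hr2.
 assert (Hpw : h^(S N) <= h) by (rewrite <- (pow_1 h) at 2; apply pow_mono; [lra|lia]).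
 assert (Hpw0 : 0 <= h^(S N)) by (apply pow_le; lra).
 assert (HDlow : - (K * h^(S N)) <= D).
 { assert (0 <= e x1 * (u x1 + U h x1) / 2).
   { apply Rmult_le_pos; [|lra]. apply Rmult_le_pos; lra. }
   lra. }
 assert (HHV : forall x, V x < Hh h).
 { intro x. apply Rabs_le_between in HHc. specialize (Hdc x).
   assert (K * h^(S N) <= K * h) by (apply Rmult_le_compat_l; lra).
   unfold D in HDlow. nra. }
 assert (Hupos : forall x, 0 < u x).
 { apply (no_zero_cross u du x1 Hud).
   intro y. unfold u. rewrite (per_deriv (vh h) Hvhp). auto.
   rewrite Hu1; lra.
   intros x Hux. pose proof (Hvheq x) as H. specialize (HHV x).
   change (P + Derive (vh h) x) with (u x) in H. change (Derive (Derive (vh h)) x) with (du x) in H.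
   rewrite Hux in H. nra. }
 assert (HDup : D <= K*h^(S N)).
 { pose proof (Hupos x2).
   assert (e x2 * (u x2 + U h x2) / 2 <= 0).
   { assert (0 <= - e x2 * (u x2 + U h x2) / 2). apply Rmult_le_pos; [|lra]. apply Rmult_le_pos; lra. lra. }
   lra. }
 assert (Hb1 : e x1 * m <= 4 * (K * h^(S N))).
 { assert (e x1 * m <= e x1 * (u x1 + U h x1)) by (apply Rmult_le_compat_l; lra). lra. }
 assert (Hb2 : - e x2 * m <= 8 * (K * h^(S N))).
 { pose proof (Hupos x2).
   assert (- e x2 * (m/2) <= - e x2 * (u x2 + U h x2)) by (apply Rmult_le_compat_l; lra). lra. }
 assert (Hebound : forall x, Rabs (e x) <= 8*K/m * h^(S N)).
 { intro x. pose proof (Hx1 x). pose proof (Hx2 x).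
   assert (Rabs (e x) * m <= 8 * (K * h^(S N))).
   { apply Rabs_le_between' || idtac.
     destruct (Rle_dec 0 (e x)).
     - rewrite Rabs_pos_eq by lra. nra.
     - rewrite Rabs_left by lra. nra. }
   apply (Rmult_le_reg_r m). lra. replace (8 * K / m * h ^ S N * m) with (8 * (K * h^(S N))) by (field; lra). lra. }
 apply Rle_trans with (8*K/m * h^(S N)).
 - change (L2T e <= 8 * K / m * h ^ S N). apply L2T_bound; auto.
 - apply Rmult_le_compat_l. apply Rmult_le_pos. lra. left; apply Rinv_0_lt_compat; lra.
   replace (S N) with (N+1)%nat by lia. apply pow_Rpower. lra.
Qed.
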